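(* Let $\Lambda\subset H^0(\mathbb{P}^r,\mathcal{O}_{\mathbb{P}^r}(2))$ be a linear system of quadrics with $\dim\Lambda=\alpha+1$, let $\Phi:\mathbb{P}^r\dashrightarrow\mathbb{P}^\alpha$ be the associated rational map, and let $X$ be the base scheme of $\Lambda$. A line $L\subset\mathbb{P}^r$ with $L\cap X=\emptyset$ is such that $\Phi_{|L}:L\to\Phi(L)$ is a double covering of a line if and only if $L$ is a secant line (possibly a tangent line) to a non-linear fibre of $\Phi$.
   Context: Over $\mathbb{C}$. The fibre of $\Phi$ through a point $P\in\mathbb{P}^r\setminus X$ means $\overline{\Phi^{-1}(\Phi(P))}$, the Zariski closure; it is non-linear if it is not a linear subspace. Secant lines include tangent lines (limits with the two points coinciding). *)

(* Defs.v *)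
From HB Require Import structures.
From mathcomp Require Import all_boot all_order all_algebra.
From mathcomp Require Import reals.
From mathcomp Require Import complex.
From mathcomp Require Import mpoly.

Set Implicit Arguments.
Unset Strict Implicit.
Unset Printing Implicit Defensive.

Import Order.TTheory GRing.Theory Num.Theory.
Local Open Scope ring_scope.

Section ProjGeom.
Variable R : realType.
Local Notation C := R[i].

(* homogeneous coordinates on P^{n-1}: nonzero row vectors of C^n *)
Definition vec (n : nat) := 'rV[C]_n.

(* two nonzero vectors represent the same projective point *)
Definition proportional n (x y : vec n) : Prop :=
  exists c : C, c != 0 /\ x = c *: y.

Definition ev n (p : {mpoly C[n]}) (x : vec n) : C := p.@[fun i => x ord0 i].

Variables (r alpha : nat).
Variable Q : 'I_alpha.+1 -> {mpoly C[r.+1]}.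

(* x (nonzero) lies in the base scheme X of Lambda (set-theoretically; for a
   line L, L \cap X = empty as schemes iff no point of L is a base point) *)
Definition in_base (x : vec r.+1) : Prop := forall k, ev (Q k) x = 0.

(* the vector of values (Q_0(x), ..., Q_alpha(x)), homogeneous coordinates of Phi(x) *)
Definition Phivec (x : vec r.+1) : vec alpha.+1 := \row_k ev (Q k) x.

Definition Phi_is (x : vec r.+1) (w : vec alpha.+1) : Prop :=
  proportional (Phivec x) w.

(* Phi^{-1}(Phi(P)) as a cone of nonzero vectors *)
Definition preimage_set (P : vec r.+1) : vec r.+1 -> Prop :=
  fun x => x != 0 /\ ~ in_base x /\ Phi_is x (Phivec P).

Definition zariski_closure (S : vec r.+1 -> Prop) : vec r.+1 -> Prop :=
  fun x => x != 0 /\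
    forall (d : nat) (p : {mpoly C[r.+1]}), p \is d.-homog ->
      (forall y, S y -> ev p y = 0) -> ev p x = 0.

Definition fibre (P : vec r.+1) : vec r.+1 -> Prop :=
  zariski_closure (preimage_set P).

End ProjGeom.

Definition is_linear (R : realType) n (F : vec R n -> Prop) : Prop :=
  exists W : {vspace 'rV[R[i]]_n}, forall x : vec R n, x != 0 -> (F x <-> x \in W).

Definition cvg_vec (R : realType) n (a : nat -> vec R n) (l : vec R n) : Prop :=
  forall e : R, 0 < e -> exists N : nat, forall m : nat, (N <= m)%N ->
    forall i, `|a m ord0 i - l ord0 i| < (e%:C)%C.

(* L (a 2-dim subspace, i.e. a line of P^{n-1}) is a secant line of F,
   possibly a tangent line: L is a limit, in the Grassmannian G(2, C^n), of
   lines joining two distinct points p_m, q_m of F. Convergence in the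
   Grassmannian is expressed by convergence of suitable bases (the Grassmannian
   carries the quotient topology of the space of pairs of independent vectors,
   and this quotient map is open). *)
Definition secant_line (R : realType) n (F : vec R n -> Prop)
    (L : {vspace 'rV[R[i]]_n}) : Prop :=
  exists (p q a b : nat -> vec R n) (a0 b0 : vec R n),
    (forall m, F (p m) /\ F (q m) /\ ~ proportional (p m) (q m)) /\
    (forall m, (<[a m]> + <[b m]> = <[p m]> + <[q m]>)%VS) /\
    cvg_vec a a0 /\ cvg_vec b b0 /\
    (<[a0]> + <[b0]> = L)%VS.

(* Phi restricted to the line L is a double covering of a line:
   Phi(L) is a line M of P^alpha and Phi_|L : L -> M has degree 2, i.e. all
   but finitely many points of M have exactly two preimages in L. *)
Definition two_preimages (R : realType) r alpha (Q : 'I_alpha.+1 -> {mpoly R[i][r.+1]})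
    (L : {vspace 'rV[R[i]]_r.+1}) (w : vec R alpha.+1) : Prop :=
  exists x1 x2 : vec R r.+1,
    [/\ x1 \in L, x1 != 0, x2 \in L & x2 != 0] /\
    Phi_is Q x1 w /\ Phi_is Q x2 w /\ ~ proportional x1 x2 /\
    forall x : vec R r.+1, x \in L -> x != 0 -> Phi_is Q x w ->
      proportional x x1 \/ proportional x x2.

Definition double_cover_of_line (R : realType) r alpha
    (Q : 'I_alpha.+1 -> {mpoly R[i][r.+1]}) (L : {vspace 'rV[R[i]]_r.+1}) : Prop :=
  exists M : {vspace 'rV[R[i]]_alpha.+1},
    \dim M = 2%N /\
    (forall x : vec R r.+1, x \in L -> x != 0 -> Phivec Q x \in M) /\
    (forall w : vec R alpha.+1, w \in M -> w != 0 ->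
       exists x : vec R r.+1, [/\ x \in L, x != 0 & Phi_is Q x w]) /\
    (exists s : seq (vec R alpha.+1),
       forall w : vec R alpha.+1, w \in M -> w != 0 -> ~ two_preimages Q L w ->
         exists2 w', w' \in s & proportional w w').

(* Main.v *)
Require Import Defs.
From HB Require Import structures.
From mathcomp Require Import all_boot all_order all_algebra.
From mathcomp Require Import reals.
From mathcomp Require Import complex.
From mathcomp Require Import mpoly.
Import Order.TTheory GRing.Theory Num.Theory.
Local Open Scope ring_scope.

From mathcomp Require Import ring lra.
From Stdlib Require Import Classical_Prop.
Set Implicit Arguments. Unset Strict Implicit. Unset Printing Implicit Defensive.

Section A.
Variable R : realType.
Local Notation C := R[i].

Definition bq (h1 h2 h3 s t : C) := h1 * s ^+ 2 + h2 * s * t + h3 * t ^+ 2.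

Lemma prop2 (c1 c2 f g : C) : (c1 != 0) || (c2 != 0) -> c2 * f = c1 * g ->
  exists l, f = l * c1 /\ g = l * c2.
Proof.
case/orP=> hc E.
- exists (f / c1); split; first by rewrite divfK.
  apply: (mulfI hc). rewrite -E. field. done.
- exists (g / c2); split; last by rewrite divfK.
  apply: (mulfI hc). rewrite E. field. done.
Qed.

Lemma bq_factor (h1 h2 h3 : C) : (h1 != 0) || (h2 != 0) || (h3 != 0) ->
  exists c s1 t1 s2 t2, [/\ c != 0, (s1 != 0) || (t1 != 0), (s2 != 0) || (t2 != 0)
   & [/\ h1 = c * t1 * t2, h2 = - (c * (t1 * s2 + t2 * s1)) & h3 = c * s1 * s2]].
Proof.
have [h10|h10] := eqVneq h1 0; last first.
  move=> _; set d := sqrtc (h2 ^+ 2 - 4%:R * h1 * h3).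
  have hd : d ^+ 2 = h2 ^+ 2 - 4%:R * h1 * h3 by rewrite sqr_sqrtc.
  exists h1, ((- h2 + d) / (2%:R * h1)), 1, ((- h2 - d) / (2%:R * h1)), 1.
  have h20 : (2%:R : C) != 0 by rewrite pnatr_eq0.
  split; [|by rewrite ?oner_neq0 ?orbT ?oppr_eq0 ?oner_neq0 //|by rewrite ?oner_neq0 ?orbT ?oppr_eq0 ?oner_neq0 //|split]; rewrite ?oner_neq0 ?orbT //.
  - by rewrite !mulr1.
  - by field.
  - have -> : h1 * ((- h2 + d) / (2%:R * h1)) * ((- h2 - d) / (2%:R * h1)) =
       (h2 ^+ 2 - d ^+ 2) / (4%:R * h1) by field.
    rewrite hd. by field.
rewrite h10 /=.
have [h30|h30] := eqVneq h3 0.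
  rewrite h30 orbF => h20.
  exists h2, 0, 1, (-1), 0; split; [|by rewrite ?oner_neq0 ?orbT ?oppr_eq0 ?oner_neq0 //|by rewrite ?oner_neq0 ?orbT ?oppr_eq0 ?oner_neq0 //|split]; rewrite ?oner_neq0 ?orbT ?oppr_eq0 ?oner_neq0 //.
  - by rewrite mulr0.
  - ring.
  - by rewrite mulr0 mul0r.
move=> _.
exists h3, 1, 0, 1, (- h2 / h3); split; [|by rewrite ?oner_neq0 ?orbT ?oppr_eq0 ?oner_neq0 //|by rewrite ?oner_neq0 ?orbT ?oppr_eq0 ?oner_neq0 //|split]; rewrite ?oner_neq0 ?orbT //.
- by rewrite mulr0 mul0r.
- field. done.
- by rewrite !mulr1.
Qed.

Lemma bq_factorE c s1 t1 s2 t2 s t :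
  bq (c * t1 * t2) (- (c * (t1 * s2 + t2 * s1))) (c * s1 * s2) s t =
  c * (t1 * s - s1 * t) * (t2 * s - s2 * t).
Proof. rewrite /bq; ring. Qed.

Lemma bq_root (h1 h2 h3 : C) : exists s t, ((s != 0) || (t != 0)) /\ bq h1 h2 h3 s t = 0.
Proof.
have [/and3P[/eqP-> /eqP-> /eqP->]|hn] :=
   boolP [&& h1 == 0, h2 == 0 & h3 == 0].
  exists 1, 0; rewrite oner_neq0; split => //; rewrite /bq; ring.
have : (h1 != 0) || (h2 != 0) || (h3 != 0) by move: hn; rewrite !negb_and orbA.
case/bq_factor=> c [s1 [t1 [s2 [t2 [c0 n1 n2 [-> -> ->]]]]]].
exists s1, t1; split => //. rewrite bq_factorE. ring.
Qed.

Lemma bq_square (h1 h2 h3 : C) : (h1 != 0) || (h2 != 0) || (h3 != 0) ->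
  h2 ^+ 2 - 4%:R * h1 * h3 = 0 ->
  exists a s t, [/\ a != 0, (s != 0) || (t != 0),
    h1 = a * t ^+ 2, h2 = - (2%:R * a * s * t) & h3 = a * s ^+ 2].
Proof.
case/bq_factor=> c [s1 [t1 [s2 [t2 [c0 n1 n2 [-> -> ->]]]]]] hd.
have hd' : c ^+ 2 * (t1 * s2 - t2 * s1) ^+ 2 = 0.
  rewrite -hd. ring.
move/eqP: hd'; rewrite mulf_eq0 !expf_eq0 /= (negbTE c0) /= subr_eq0 => /eqP E.
have [l [E1 E2]] : exists l, s2 = l * s1 /\ t2 = l * t1.
  apply: (@prop2 s1 t1 s2 t2 n1). by rewrite E mulrC.
have l0 : l != 0.
  apply/negP=> /eqP l0; move: n2; by rewrite E1 E2 l0 !mul0r eqxx.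
exists (c * l), s1, t1; split => //.
- by rewrite mulf_neq0.
- rewrite E2; ring.
- rewrite E1 E2; ring.
- rewrite E1; ring.
Qed.

End A.

Section B.
Variable R : realType.
Local Notation C := R[i].

Lemma ek_le n (e : 'I_n -> nat) k : (e k <= \sum_j e j)%N.
Proof. by rewrite (bigD1 k) //= leq_addr. Qed.

Lemma prod_deg0 n (e : 'I_n -> nat) : (\sum_k e k = 0)%N ->
  forall v : 'I_n -> C, \prod_k v k ^+ e k = 1.
Proof.
move=> he v; apply: big1 => k _.
have := ek_le e k; rewrite he leqn0 => /eqP ->; by rewrite expr0.
Qed.

Lemma prod_deg1 n (e : 'I_n -> nat) : (\sum_k e k = 1)%N ->
  exists i, forall v : 'I_n -> C, \prod_k v k ^+ e k = v i.
Proof.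
elim: n e => [|n IH] e; first by rewrite big_ord0.
rewrite big_ord_recl => he.
case E0: (e ord0) he => [|[|e0]] he.
- rewrite add0n in he. have [i Hi] := IH _ he.
  exists (lift ord0 i) => v. rewrite big_ord_recl E0 expr0 mul1r.
  exact: (Hi (fun k => v (lift ord0 k))).
- have he' : (\sum_k e (lift ord0 k) = 0)%N by move: he; rewrite add1n => -[].
  exists ord0 => v. rewrite big_ord_recl E0 expr1.
  by rewrite (prod_deg0 he' (fun k => v (lift ord0 k))) mulr1.
- by move: he; rewrite addSn addSn.
Qed.

Lemma prod_deg2 n (e : 'I_n -> nat) : (\sum_k e k = 2)%N ->
  exists i j, forall v : 'I_n -> C, \prod_k v k ^+ e k = v i * v j.
Proof.
elim: n e => [|n IH] e; first by rewrite big_ord0.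
rewrite big_ord_recl => he.
case E0: (e ord0) he => [|[|[|e0]]] he.
- rewrite add0n in he. have [i [j Hi]] := IH _ he.
  exists (lift ord0 i), (lift ord0 j) => v. rewrite big_ord_recl E0 expr0 mul1r.
  exact: (Hi (fun k => v (lift ord0 k))).
- have he' : (\sum_k e (lift ord0 k) = 1)%N by move: he; rewrite add1n => -[].
  have [j Hj] := prod_deg1 he'.
  exists ord0, (lift ord0 j) => v. rewrite big_ord_recl E0 expr1.
  by rewrite (Hj (fun k => v (lift ord0 k))).
- have he' : (\sum_k e (lift ord0 k) = 0)%N by move: he; rewrite !addSn => -[].
  exists ord0, ord0 => v. rewrite big_ord_recl E0 expr2.
  by rewrite (prod_deg0 he' (fun k => v (lift ord0 k))) mulr1.
- by move: he; rewrite !addSn.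
Qed.


Lemma QL n (p : {mpoly C[n]}) : p \is 2.-homog ->
  forall (a b : vec R n) (s t : C),
  ev p (s *: a + t *: b) = s ^+ 2 * ev p a + s * t * (ev p (a + b) - ev p a - ev p b)
     + t ^+ 2 * ev p b.
Proof.
move=> hp a b s t; rewrite /ev !mevalE.
have key : forall m, m \in msupp p ->
  \prod_i (s *: a + t *: b) ord0 i ^+ m i =
  s ^+ 2 * \prod_i a ord0 i ^+ m i
  + s * t * (\prod_i (a + b) ord0 i ^+ m i - \prod_i a ord0 i ^+ m i - \prod_i b ord0 i ^+ m i)
  + t ^+ 2 * \prod_i b ord0 i ^+ m i.
  move=> m /(dhomog_mf hp) hm; have hm2 : @mdeg n m = 2%N := hm; move: hm2; rewrite mdegE => /prod_deg2 [i [j H]].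
  rewrite !H !mxE. ring.
rewrite (eq_big_seq _ (fun m hm => congr1 (fun x => p@_m * x) (key m hm))).
rewrite -!sumrB !mulr_sumr -!big_split /=.
apply: eq_bigr => m _; ring.
Qed.

End B.

Section Cv.
Variable R : realType.
Local Notation C := R[i].
Local Notation nc := (@Normc.normc R).

Lemma nc_ge0 (z : C) : 0 <= nc z. Proof. case: z => a b. exact: sqrtr_ge0. Qed.
Lemma ncD (x y : C) : nc (x + y) <= nc x + nc y. Proof. exact: le_normcD. Qed.
Lemma ncM (x y : C) : nc (x * y) = nc x * nc y. Proof. exact: Normc.normcM. Qed.
Lemma ncN (x : C) : nc (- x) = nc x. Proof. exact: normcN. Qed.

Definition cvC (u : nat -> C) (l : C) := forall e : R, 0 < e ->
  exists N, forall m, (N <= m)%N -> nc (u m - l) < e.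

Lemma cvC_const (c : C) : cvC (fun _ => c) c.
Proof. move=> e e0; exists 0%N => m _; by rewrite subrr Normc.normc0. Qed.

Lemma cvC_add u v a b : cvC u a -> cvC v b -> cvC (fun m => u m + v m) (a + b).
Proof.
move=> hu hv e e0.
have e2 : 0 < e / 2 by lra.
have [N1 H1] := hu _ e2; have [N2 H2] := hv _ e2.
exists (maxn N1 N2) => m hm.
have h1 := H1 m (leq_trans (leq_maxl _ _) hm).
have h2 := H2 m (leq_trans (leq_maxr _ _) hm).
have := ncD (u m - a) (v m - b).
have -> : u m - a + (v m - b) = u m + v m - (a + b) by ring.
lra.
Qed.

Lemma cvC_opp u a : cvC u a -> cvC (fun m => - u m) (- a).
Proof.
move=> hu e e0; have [N H] := hu _ e0; exists N => m hm.
have -> : - u m - - a = - (u m - a) by ring.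
by rewrite ncN; apply: H.
Qed.

Lemma cvC_mul u v a b : cvC u a -> cvC v b -> cvC (fun m => u m * v m) (a * b).
Proof.
move=> hu hv e e0.
set A := nc a; set B := nc b.
have A0 : 0 <= A := nc_ge0 a. have B0 : 0 <= B := nc_ge0 b.
have d2 : 0 < e / (3%:R * (B + 1)) by apply: divr_gt0 => //; lra.
have d3 : 0 < e / (3%:R * (A + 1)) by apply: divr_gt0 => //; lra.
have [N1 H1] := hu _ ltr01.
have [N2 H2] := hu _ d2.
have [N3 H3] := hv _ d3.
exists (maxn N1 (maxn N2 N3)) => m hm.
have h1 := H1 m (leq_trans (leq_maxl _ _) hm).
have h2 := H2 m (leq_trans (leq_maxl _ _) (leq_trans (leq_maxr _ _) hm)).
have h3 := H3 m (leq_trans (leq_maxr _ _) (leq_trans (leq_maxr _ _) hm)).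
set X := nc (u m - a) in h1 h2 *; set Y := nc (v m - b) in h3 *.
have X0 : 0 <= X := nc_ge0 _. have Y0 : 0 <= Y := nc_ge0 _.
have hX : X * (B + 1) < e / 3%:R.
  have -> : e / 3%:R = e / (3%:R * (B + 1)) * (B + 1) by field; lra.
  by rewrite ltr_pM2r //; lra.
have hY : Y * (A + 1) < e / 3%:R.
  have -> : e / 3%:R = e / (3%:R * (A + 1)) * (A + 1) by field; lra.
  by rewrite ltr_pM2r //; lra.
have -> : u m * v m - a * b = (u m - a) * (v m - b) + (a * (v m - b) + b * (u m - a)) by ring.
apply: (le_lt_trans (ncD _ _)).
apply: (le_lt_trans (lerD (lexx _) (ncD _ _))).
rewrite !ncM -/X -/Y -/A -/B.
have : X * Y <= Y by rewrite -[leRHS]mul1r; apply: ler_wpM2r => //; lra.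
nra.
Qed.

Lemma cvC_ext u v a : (forall m, u m = v m) -> cvC u a -> cvC v a.
Proof. move=> E hu e e0; have [N H] := hu _ e0; exists N => m hm; rewrite -E; exact: H. Qed.

Lemma cvC_sum (I : Type) (r : seq I) (P : pred I) (F : I -> nat -> C) (G : I -> C) :
  (forall i, cvC (F i) (G i)) ->
  cvC (fun m => \sum_(i <- r | P i) F i m) (\sum_(i <- r | P i) G i).
Proof.
move=> H; elim: r => [|x r IH].
  rewrite big_nil; apply: (@cvC_ext (fun _ => _)); last exact: cvC_const. by move=> m; rewrite big_nil.
rewrite big_cons; case Px: (P x).
  apply: (cvC_ext _ (cvC_add (H x) IH)) => m; by rewrite big_cons Px.
apply: (cvC_ext _ IH) => m; by rewrite big_cons Px.
Qed.

Lemma cvC_prod (I : Type) (r : seq I) (P : pred I) (F : I -> nat -> C) (G : I -> C) :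
  (forall i, cvC (F i) (G i)) ->
  cvC (fun m => \prod_(i <- r | P i) F i m) (\prod_(i <- r | P i) G i).
Proof.
move=> H; elim: r => [|x r IH].
  rewrite big_nil; apply: (@cvC_ext (fun _ => _)); last exact: cvC_const. by move=> m; rewrite big_nil.
rewrite big_cons; case Px: (P x).
  apply: (cvC_ext _ (cvC_mul (H x) IH)) => m; by rewrite big_cons Px.
apply: (cvC_ext _ IH) => m; by rewrite big_cons Px.
Qed.

Lemma cvC_exp u a k : cvC u a -> cvC (fun m => u m ^+ k) (a ^+ k).
Proof.
move=> hu; elim: k => [|k IH].
  rewrite expr0; apply: (@cvC_ext (fun _ => _)); last exact: cvC_const. by move=> m; rewrite expr0.
rewrite exprS; apply: (cvC_ext _ (cvC_mul hu IH)) => m; by rewrite exprS.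
Qed.

End Cv.

Section D.
Variables (R : realType) (r alpha : nat) (Q : 'I_alpha.+1 -> {mpoly R[i][r.+1]}).
Hypothesis HQ2 : forall k, Q k \is 2.-homog.
Local Notation C := R[i].
Local Notation N := alpha.+1.
Local Notation n := r.+1.

Definition Mx (a b : vec R n) : 'M[C]_(3, N) :=
  \matrix_(i < 3, k < N) (if (i : nat) == 0%N then ev (Q k) a
     else if (i : nat) == 1%N then ev (Q k) (a + b) - ev (Q k) a - ev (Q k) b
     else ev (Q k) b).

Definition vv (s t : C) : 'rV[C]_3 :=
  \row_(i < 3) (if (i : nat) == 0%N then s ^+ 2 else if (i : nat) == 1%N then s * t else t ^+ 2).

Lemma sum3 (F : 'I_3 -> C) : \sum_i F i = F ord0 + F (lift ord0 ord0) + F (lift ord0 (lift ord0 ord0)).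
Proof. by rewrite !big_ord_recl big_ord0 addr0 addrA. Qed.

Lemma Phivec_line (a b : vec R n) s t :
  Phivec Q (s *: a + t *: b) = vv s t *m Mx a b.
Proof.
apply/rowP => k; rewrite !mxE sum3 !mxE /=.
rewrite (QL (HQ2 k)). ring.
Qed.

Lemma Phivec_entry x k : Phivec Q x ord0 k = ev (Q k) x.
Proof. by rewrite mxE. Qed.

Lemma in_baseE x : in_base Q x <-> Phivec Q x = 0.
Proof.
split.
- by move=> H; apply/rowP => k; rewrite !mxE H.
- by move=> H k; rewrite -Phivec_entry H mxE.
Qed.

Lemma cvg_entry m0 (a : nat -> vec R m0) (a0 : vec R m0) : cvg_vec a a0 ->
  forall i, cvC (fun m => a m ord0 i) (a0 ord0 i).
Proof.
move=> H i e e0; have [N0 HN] := H e e0; exists N0 => m hm.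
have := HN m hm i. by rewrite -ltcR.
Qed.

Lemma cvg_vecD m0 (a b : nat -> vec R m0) (a0 b0 : vec R m0) : cvg_vec a a0 -> cvg_vec b b0 ->
  forall i, cvC (fun m => (a m + b m) ord0 i) ((a0 + b0) ord0 i).
Proof.
move=> ha hb i; rewrite mxE.
apply: (cvC_ext _ (cvC_add (cvg_entry ha i) (cvg_entry hb i))) => m; by rewrite mxE.
Qed.

Lemma cvC_ev m0 (p : {mpoly C[m0]}) (a : nat -> vec R m0) (a0 : vec R m0) :
  (forall i, cvC (fun m => a m ord0 i) (a0 ord0 i)) ->
  cvC (fun m => ev p (a m)) (ev p a0).
Proof.
move=> H; rewrite /ev mevalE.
apply: (cvC_ext _ _); first by move=> m; rewrite mevalE.
apply: cvC_sum => mm; apply: cvC_mul; first exact: cvC_const.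
apply: cvC_prod => i; exact: cvC_exp.
Qed.


Lemma cvC_Mx (a b : nat -> vec R n) (a0 b0 : vec R n) : cvg_vec a a0 -> cvg_vec b b0 ->
  forall i k, cvC (fun m => Mx (a m) (b m) i k) (Mx a0 b0 i k).
Proof.
move=> ha hb i k; rewrite mxE.
have Ea := cvC_ev (Q k) (cvg_entry ha).
have Eb := cvC_ev (Q k) (cvg_entry hb).
have Eab := cvC_ev (Q k) (cvg_vecD ha hb).
case: ifP => h0.
  apply: (cvC_ext _ Ea) => m; by rewrite mxE h0.
case: ifP => h1.
  apply: (cvC_ext _ (cvC_add (cvC_add Eab (cvC_opp Ea)) (cvC_opp Eb))) => m; by rewrite mxE h0 h1.
apply: (cvC_ext _ Eb) => m; by rewrite mxE h0 h1.
Qed.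

Lemma cvC_mulmx p1 p2 p3 (A : nat -> 'M[C]_(p1, p2)) (A0 : 'M[C]_(p1, p2)) (B : 'M[C]_(p2, p3)) :
  (forall i j, cvC (fun m => A m i j) (A0 i j)) ->
  forall i j, cvC (fun m => (A m *m B) i j) ((A0 *m B) i j).
Proof.
move=> H i j; rewrite mxE.
apply: (cvC_ext _ _); first by move=> m; rewrite mxE.
apply: cvC_sum => k; apply: cvC_mul => //; exact: cvC_const.
Qed.

Lemma cvC_det p1 (A : nat -> 'M[C]_p1) (A0 : 'M[C]_p1) :
  (forall i j, cvC (fun m => A m i j) (A0 i j)) ->
  cvC (fun m => \det (A m)) (\det A0).
Proof.
move=> H; rewrite /determinant.
apply: cvC_sum => s; apply: cvC_mul; first exact: cvC_const.
apply: cvC_prod => i; exact: H.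
Qed.

End D.

Section E.
Variables (R : realType) (r alpha : nat) (Q : 'I_alpha.+1 -> {mpoly R[i][r.+1]}).
Hypothesis HQ2 : forall k, Q k \is 2.-homog.
Local Notation C := R[i].
Local Notation N := alpha.+1.
Local Notation n := r.+1.

Lemma not_base_ex (x : vec R n) : ~ in_base Q x -> exists k, ev (Q k) x != 0.
Proof.
move=> hx; case: (boolP [exists k, ev (Q k) x != 0]) => [/existsP//|/existsPn H].
exfalso; apply: hx => k; by move: (H k); rewrite negbK => /eqP.
Qed.

Lemma prop_entry (x y : vec R n) c : Phivec Q x = c *: Phivec Q y ->
  forall k, ev (Q k) x = c * ev (Q k) y.
Proof. move=> E k; by rewrite -!Phivec_entry E mxE. Qed.

Lemma closure_phi (P x : vec R n) : ~ in_base Q P ->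
  zariski_closure (preimage_set Q P) x -> ~ in_base Q x -> Phi_is Q x (Phivec Q P).
Proof.
move=> hP [x0 hcl] hx.
have [k0 hk0] := not_base_ex hP.
have key : forall j, ev (Q k0) P * ev (Q j) x = ev (Q j) P * ev (Q k0) x.
  move=> j.
  pose pj := ev (Q k0) P *: Q j - ev (Q j) P *: Q k0.
  have hpj : pj \is 2.-homog by rewrite rpredB // rpredZ.
  have := hcl 2%N pj hpj.
  rewrite /pj /ev !mevalB !mevalZ => H.
  apply/eqP; rewrite -subr_eq0; apply/eqP; apply: H.
  move=> y [y0 [hy [c [c0 E]]]].
  have := prop_entry E; rewrite /ev => Ey.
  rewrite !mevalB !mevalZ !Ey. ring.
exists (ev (Q k0) x / ev (Q k0) P); split.
  rewrite mulf_neq0 // ?invr_eq0 //.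
  apply/negP => /eqP h0; apply: hx => k.
  have := key k; rewrite h0 mulr0 => /eqP; by rewrite mulf_eq0 (negbTE hk0) => /eqP.
apply/rowP => k; rewrite !mxE.
apply: (mulfI hk0). rewrite key. field. done.
Qed.

Lemma proportional_sym m0 (x y : vec R m0) : proportional x y -> proportional y x.
Proof.
move=> [c [c0 ->]]; exists c^-1; split; first by rewrite invr_eq0.
by rewrite scalerA mulVf // scale1r.
Qed.

Lemma proportional_trans m0 (x y z : vec R m0) : proportional x y -> proportional y z -> proportional x z.
Proof.
move=> [c [c0 ->]] [d [d0 ->]]; exists (c * d); split; first by rewrite mulf_neq0.
by rewrite scalerA.
Qed.


Lemma vv_entries (s t : C) : [/\ vv s t ord0 ord0 = s ^+ 2,
   vv s t ord0 (lift ord0 ord0) = s * t & vv s t ord0 (lift ord0 (lift ord0 ord0)) = t ^+ 2].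
Proof. by rewrite !mxE. Qed.

Lemma G_cancel (a b : vec R n) (B : 'M[C]_(N,3)) (u1 u2 : 'rV[C]_3) :
  \det (Mx Q a b *m B) != 0 -> u1 *m Mx Q a b = u2 *m Mx Q a b -> u1 = u2.
Proof.
move=> hd E.
have hu : Mx Q a b *m B \in unitmx by rewrite unitmxE unitfE.
rewrite -(mulmxK hu u1) -(mulmxK hu u2) !mulmxA E. done.
Qed.

Lemma G_inj (a b : vec R n) (B : 'M[C]_(N,3)) : \det (Mx Q a b *m B) != 0 ->
  forall s1 t1 s2 t2 c, (s2 != 0) || (t2 != 0) ->
  Phivec Q (s1 *: a + t1 *: b) = c *: Phivec Q (s2 *: a + t2 *: b) ->
  exists l, s1 = l * s2 /\ t1 = l * t2.
Proof.
move=> hd s1 t1 s2 t2 c n2.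
rewrite !(Phivec_line HQ2) scalemxAl => /(G_cancel hd) E.
have := vv_entries s1 t1; rewrite E.
rewrite !mxE /= => -[E1 E2 E3].
apply: (@prop2 _ s2 t2 s1 t1 n2).
have h : (s1 * t2 - s2 * t1) ^+ 2 = 0.
  have -> : (s1 * t2 - s2 * t1) ^+ 2 = s1 ^+ 2 * t2 ^+ 2 - 2%:R * (s1 * t1) * (s2 * t2) + s2 ^+ 2 * t1 ^+ 2 by ring.
  rewrite -E1 -E2 -E3. ring.
move/eqP: h; rewrite expf_eq0 /= subr_eq0 => /eqP h.
by rewrite mulrC h.
Qed.

Lemma G_nonbase (a b : vec R n) (B : 'M[C]_(N,3)) : \det (Mx Q a b *m B) != 0 ->
  forall s t, (s != 0) || (t != 0) -> Phivec Q (s *: a + t *: b) != 0.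
Proof.
move=> hd s t hst; apply/eqP; rewrite (Phivec_line HQ2) => E.
have : vv s t *m Mx Q a b = 0 *m Mx Q a b by rewrite E mul0mx.
move/(G_cancel hd) => E'.
have := vv_entries s t; rewrite E' !mxE => -[/esym/eqP h1 _ /esym/eqP h3].
move: h1 h3 hst; rewrite !expf_eq0 /= => /eqP-> /eqP->; by rewrite eqxx.
Qed.

End E.

Section G.
Variable R : realType.
Local Notation C := R[i].
Variable m0 : nat.
Implicit Types a b x u : 'rV[C]_m0.

Definition indep a b := forall s t : C, s *: a + t *: b = 0 -> s = 0 /\ t = 0.

Lemma mem_span2 a b x : x \in (<[a]> + <[b]>)%VS <-> exists s t, x = s *: a + t *: b.
Proof.
split.
- case/memv_addP=> u /vlineP [s ->] [v /vlineP [t ->] ->]. by exists s, t.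
- case=> s [t ->]. by rewrite memv_add // memvZ // memv_line.
Qed.

Lemma dim_line_le1 a : (\dim <[a]> <= 1)%N.
Proof. by rewrite dim_vline; case: (a != 0). Qed.

Lemma dim_le1 a b : a \in <[b]>%VS -> (\dim (<[a]> + <[b]>) <= 1)%N.
Proof.
move=> ha; apply: leq_trans (dim_line_le1 b).
apply: dimvS; by rewrite subv_add -memvE ha subvv.
Qed.

Lemma dim_indep a b : \dim (<[a]> + <[b]>) = 2%N -> indep a b.
Proof.
move=> hd s t E.
have [s0|s0] := eqVneq s 0.
  split => //; have [//|t0] := eqVneq t 0; exfalso.
  move: E; rewrite s0 scale0r add0r => /eqP; rewrite scaler_eq0 (negbTE t0) /= => /eqP b0.
  have := dim_le1 (a := b) (b := a); rewrite b0 mem0v addvC => /(_ isT).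
  by rewrite -b0 hd.
exfalso.
have ha : a \in <[b]>%VS.
  apply/vlineP; exists (- t / s).
  apply: (scalerI s0). rewrite scalerA mulrC divfK // scaleNr.
  by apply/eqP; rewrite -subr_eq0 opprK E.
by have := dim_le1 ha; rewrite hd.
Qed.

Lemma indep_dim a b : indep a b -> \dim (<[a]> + <[b]>) = 2%N.
Proof.
move=> hi.
have a0 : a != 0.
  apply/eqP => a0; have := hi 1 0; rewrite a0 scaler0 scale0r addr0 => /(_ erefl) [].
  by move/eqP; rewrite oner_eq0.
have b0 : b != 0.
  apply/eqP => b0; have := hi 0 1; rewrite b0 scaler0 scale0r addr0 => /(_ erefl) [_].
  by move/eqP; rewrite oner_eq0.
rewrite dimv_disjoint_sum ?dim_vline ?a0 ?b0 //.
apply/eqP; rewrite -subv0; apply/subvP => x; rewrite memv_cap memv0.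
case/andP => /vlineP [s ->] /vlineP [t E].
have := hi s (- t); rewrite scaleNr E subrr => /(_ erefl) [_ /eqP]; rewrite oppr_eq0 => /eqP ->; by rewrite scale0r.
Qed.

Lemma indep_nz a b : indep a b -> a != 0 /\ b != 0.
Proof.
move=> hi; split; apply/eqP => h0.
- have := hi 1 0; rewrite h0 scaler0 scale0r addr0 => /(_ erefl) [].
  by move/eqP; rewrite oner_eq0.
- have := hi 0 1; rewrite h0 scaler0 scale0r addr0 => /(_ erefl) [_].
  by move/eqP; rewrite oner_eq0.
Qed.

Lemma indep_coord a b s1 t1 s2 t2 : indep a b ->
  s1 *: a + t1 *: b = s2 *: a + t2 *: b -> s1 = s2 /\ t1 = t2.
Proof.
move=> hi E.
have := hi (s1 - s2) (t1 - t2).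
rewrite !scalerBl addrACA -opprD E subrr => /(_ erefl) [/eqP h1 /eqP h2].
by move: h1 h2; rewrite !subr_eq0 => /eqP-> /eqP->.
Qed.

Lemma indep_nonprop a b : indep a b -> ~ proportional a b.
Proof.
move=> hi [c [c0 E]].
have := hi 1 (- c); rewrite scale1r scaleNr -E subrr => /(_ erefl) [].
by move/eqP; rewrite oner_eq0.
Qed.

Lemma nonprop_indep a b : a != 0 -> b != 0 -> ~ proportional a b -> indep a b.
Proof.
move=> a0 b0 np s t E.
have [s0|s0] := eqVneq s 0.
  split => //; move: E; rewrite s0 scale0r add0r => /eqP; rewrite scaler_eq0.
  by rewrite (negbTE b0) orbF => /eqP.
exfalso; apply: np; exists (- t / s); split.
  rewrite mulf_neq0 ?invr_eq0 // oppr_eq0; apply/eqP => t0.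
  move: E; rewrite t0 scale0r addr0 => /eqP; rewrite scaler_eq0 (negbTE s0) /=.
  by rewrite (negbTE a0).
apply: (scalerI s0). rewrite scalerA mulrC divfK // scaleNr.
by apply/eqP; rewrite -subr_eq0 opprK E.
Qed.


Lemma span2_eq (L : {vspace 'rV[C]_m0}) a b : \dim L = 2%N -> a \in L -> b \in L -> indep a b ->
  L = (<[a]> + <[b]>)%VS.
Proof.
move=> hL ha hb hi; apply/eqP; rewrite eq_sym eqEdim hL indep_dim // leqnn andbT.
by rewrite subv_add -!memvE ha hb.
Qed.

Lemma basis2 (M : {vspace 'rV[C]_m0}) : \dim M = 2%N ->
  exists u1 u2, [/\ u1 \in M, u2 \in M & indep u1 u2].
Proof.
move=> hM.
have M0 : M != 0%VS by apply/eqP => M0; move: hM; rewrite M0 dimv0.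
set u1 := vpick M.
have u10 : u1 != 0 by rewrite vpick0.
have : ~~ (M <= <[u1]>)%VS.
  apply/negP => /dimvS; by rewrite hM dim_vline u10.
case/subvPn => u2 hu2 nu2.
exists u1, u2; split => //; first exact: memv_pick.
move=> s t E.
have [t0|t0] := eqVneq t 0.
  split => //; move: E; rewrite t0 scale0r addr0 => /eqP; rewrite scaler_eq0 (negbTE u10) orbF.
  by move/eqP.
exfalso; move/negP: nu2; apply; apply/vlineP; exists (- s / t).
apply: (scalerI t0). rewrite scalerA mulrC divfK // scaleNr.
by apply/eqP; rewrite -subr_eq0 opprK addrC E.
Qed.

End G.

Section H.
Variable F : fieldType.
Lemma factor32 N (A : 'M[F]_(3, N)) : ~~ row_free A ->
  exists (U : 'M[F]_(3, 2)) (V : 'M[F]_(2, N)), A = U *m V.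
Proof.
move=> hA.
have hk : (\rank A <= 2)%N.
  move: hA; rewrite /row_free; have := rank_leq_row A; rewrite leq_eqVlt.
  by case/orP => [->|].
exists (col_ebase A *m pid_mx (\rank A)), (pid_mx (\rank A) *m row_ebase A).
rewrite -{1}(mulmx_ebase A) !mulmxA -[_ *m pid_mx _ *m pid_mx _]mulmxA mul_pid_mx.
by rewrite minnn (minn_idPr hk).
Qed.
End H.

Section I.
Variables (R : realType) (r alpha : nat) (Q : 'I_alpha.+1 -> {mpoly R[i][r.+1]}).
Local Notation C := R[i].
Local Notation N := alpha.+1.
Local Notation n := r.+1.
Variables (a0 b0 : vec R n) (u1 u2 : vec R N) (F1 F2 F3 G1 G2 G3 : C).
Hypothesis hab : indep a0 b0.
Hypothesis Hphi : forall s t, Phivec Q (s *: a0 + t *: b0) =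
   bq F1 F2 F3 s t *: u1 + bq G1 G2 G3 s t *: u2.
Hypothesis NB : forall s t, (s != 0) || (t != 0) -> Phivec Q (s *: a0 + t *: b0) != 0.

Lemma nocommon s t : (s != 0) || (t != 0) -> bq F1 F2 F3 s t = 0 -> bq G1 G2 G3 s t = 0 -> False.
Proof.
move=> hst hf hg; move/negP: (NB hst); apply; by rewrite Hphi hf hg !scale0r addr0.
Qed.

Lemma bq_lin (c d : C) s t : bq (c * F1 - d * G1) (c * F2 - d * G2) (c * F3 - d * G3) s t =
  c * bq F1 F2 F3 s t - d * bq G1 G2 G3 s t.
Proof. rewrite /bq; ring. Qed.

Lemma indep_u : indep u1 u2.
Proof.
move=> c1 c2 E.
have [/andP[/eqP c10 /eqP c20]|hc] := boolP ((c1 == 0) && (c2 == 0)); first by [].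
exfalso.
have hc' : (c1 != 0) || (c2 != 0) by move: hc; rewrite negb_and.
have [s [t [hst hr]]] := bq_root (c2 * F1 - c1 * G1) (c2 * F2 - c1 * G2) (c2 * F3 - c1 * G3).
move: hr; rewrite bq_lin => /eqP; rewrite subr_eq0 => /eqP hr.
have [l [El Eg]] := prop2 hc' hr.
move/negP: (NB hst); apply; rewrite Hphi El Eg -!scalerA -scalerDr E scaler0 //.
Qed.

Lemma x_nz s t : (s != 0) || (t != 0) -> s *: a0 + t *: b0 != 0.
Proof.
move=> hst; apply/eqP => /hab [s0 t0]; move: hst; by rewrite s0 t0 eqxx.
Qed.

Lemma x_st x : x \in (<[a0]> + <[b0]>)%VS -> x != 0 ->
  exists s t, [/\ (s != 0) || (t != 0) & x = s *: a0 + t *: b0].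
Proof.
case/mem_span2 => s [t ->] hx; exists s, t; split => //.
have [s0|//] := eqVneq s 0; have [t0|//] := eqVneq t 0; move: hx; by rewrite s0 t0 !scale0r addr0 eqxx.
Qed.

Definition hw1 (w1 w2 : C) := w2 * F1 - w1 * G1.
Definition hw2 (w1 w2 : C) := w2 * F2 - w1 * G2.
Definition hw3 (w1 w2 : C) := w2 * F3 - w1 * G3.

Lemma phi_is_root w1 w2 s t : (w1 != 0) || (w2 != 0) -> (s != 0) || (t != 0) ->
  bq (hw1 w1 w2) (hw2 w1 w2) (hw3 w1 w2) s t = 0 ->
  Phi_is Q (s *: a0 + t *: b0) (w1 *: u1 + w2 *: u2).
Proof.
move=> hw hst; rewrite /hw1 /hw2 /hw3 bq_lin => /eqP; rewrite subr_eq0 => /eqP hr.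
have [l [El Eg]] := prop2 hw hr.
exists l; split.
  apply/eqP => l0; apply: (nocommon hst); by rewrite ?El ?Eg l0 mul0r.
by rewrite Hphi El Eg scalerDr !scalerA.
Qed.

Lemma phi_is_root_inv w1 w2 s t :
  Phi_is Q (s *: a0 + t *: b0) (w1 *: u1 + w2 *: u2) ->
  bq (hw1 w1 w2) (hw2 w1 w2) (hw3 w1 w2) s t = 0.
Proof.
case=> c [c0 E]; move: E; rewrite Hphi scalerDr !scalerA => /(indep_coord indep_u) [E1 E2].
rewrite /hw1 /hw2 /hw3 bq_lin E1 E2; ring.
Qed.


Definition disc (h1 h2 h3 : C) := h2 ^+ 2 - 4%:R * h1 * h3.

Lemma two_pre w1 w2 : (w1 != 0) || (w2 != 0) ->
  disc (hw1 w1 w2) (hw2 w1 w2) (hw3 w1 w2) != 0 ->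
  two_preimages Q (<[a0]> + <[b0]>)%VS (w1 *: u1 + w2 *: u2).
Proof.
move=> hw hd.
have hn : (hw1 w1 w2 != 0) || (hw2 w1 w2 != 0) || (hw3 w1 w2 != 0).
  move: hd; apply: contraNT; rewrite !negb_or !negbK => /andP [/andP [/eqP-> /eqP->] _].
  rewrite /disc; apply/eqP; ring.
case: (bq_factor hn) => c [s1 [t1 [s2 [t2 [c0 n1 n2 [E1 E2 E3]]]]]].
have hdet : t1 * s2 - t2 * s1 != 0.
  apply/eqP => h0; move/eqP: hd; apply; rewrite /disc E1 E2 E3.
  have -> : (- (c * (t1 * s2 + t2 * s1))) ^+ 2 - 4%:R * (c * t1 * t2) * (c * s1 * s2) =
     c ^+ 2 * (t1 * s2 - t2 * s1) ^+ 2 by ring.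
  by rewrite h0 expr0n mulr0.
have hbq : forall s t, bq (hw1 w1 w2) (hw2 w1 w2) (hw3 w1 w2) s t =
    c * (t1 * s - s1 * t) * (t2 * s - s2 * t).
  by move=> s t; rewrite E1 E2 E3 bq_factorE.
exists (s1 *: a0 + t1 *: b0), (s2 *: a0 + t2 *: b0).
split; first split.
- by apply/mem_span2; exists s1, t1.
- exact: x_nz.
- by apply/mem_span2; exists s2, t2.
- exact: x_nz.
split.
  apply: phi_is_root => //; rewrite hbq; ring.
split.
  apply: phi_is_root => //; rewrite hbq; ring.
split.
  case=> l [l0 E]; move: E; rewrite scalerDr !scalerA => /(indep_coord hab) [Es Et].
  move/eqP: hdet; apply; rewrite Es Et; ring.
move=> x hx x0 hphi.
have [s [t [hst Ex]]] := x_st hx x0.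
have := hphi; rewrite Ex => /phi_is_root_inv.
rewrite hbq => /eqP; rewrite !mulf_eq0 (negbTE c0) /= => /orP [] /eqP h.
- left; move/eqP: h; rewrite subr_eq0 => /eqP h.
  have [l [El Et]] := @prop2 _ s1 t1 s t n1 h.
  exists l; split.
    apply/eqP => l0; move: x0; by rewrite Ex El Et l0 !mul0r !scale0r addr0 eqxx.
  by rewrite El Et scalerDr !scalerA.
- right; move/eqP: h; rewrite subr_eq0 => /eqP h.
  have [l [El Et]] := @prop2 _ s2 t2 s t n2 h.
  exists l; split.
    apply/eqP => l0; move: x0; by rewrite Ex El Et l0 !mul0r !scale0r addr0 eqxx.
  by rewrite El Et scalerDr !scalerA.
Qed.


Definition D1 := G2 ^+ 2 - 4%:R * G1 * G3.
Definition D2 := - (2%:R * F2 * G2) + 4%:R * (F1 * G3 + G1 * F3).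
Definition D3 := F2 ^+ 2 - 4%:R * F1 * F3.

Lemma disc_D w1 w2 : disc (hw1 w1 w2) (hw2 w1 w2) (hw3 w1 w2) = bq D1 D2 D3 w1 w2.
Proof. rewrite /disc /hw1 /hw2 /hw3 /bq /D1 /D2 /D3; ring. Qed.

Lemma Dnz : (D1 != 0) || (D2 != 0) || (D3 != 0).
Proof.
apply: contraT; rewrite !negb_or !negbK => /andP [/andP [/eqP d1 /eqP d2] /eqP d3]; exfalso.
have Fn : (F1 != 0) || (F2 != 0) || (F3 != 0).
  apply: contraT; rewrite !negb_or !negbK => /andP [/andP [/eqP f1 /eqP f2] /eqP f3]; exfalso.
  have [s [t [hst hr]]] := bq_root G1 G2 G3.
  apply: (nocommon hst) hr; rewrite /bq f1 f2 f3; ring.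
have Gn : (G1 != 0) || (G2 != 0) || (G3 != 0).
  apply: contraT; rewrite !negb_or !negbK => /andP [/andP [/eqP f1 /eqP f2] /eqP f3]; exfalso.
  have [s [t [hst hr]]] := bq_root F1 F2 F3.
  apply: (nocommon hst hr); rewrite /bq f1 f2 f3; ring.
have [a [s [t [a0' hst E1 E2 E3]]]] := bq_square Fn d3.
have [b [s' [t' [b0' hst' E1' E2' E3']]]] := bq_square Gn d1.
have h : 4%:R * a * b * (t * s' - s * t') ^+ 2 = 0.
  rewrite -d2 /D2 E1 E2 E3 E1' E2' E3'; ring.
move/eqP: h; rewrite !mulf_eq0 (negbTE a0') (negbTE b0') pnatr_eq0 /= orbb subr_eq0.
move/eqP => h.
apply: (nocommon hst).
  rewrite /bq E1 E2 E3; ring.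
have -> : bq G1 G2 G3 s t = b * (t' * s - s' * t) ^+ 2 by rewrite /bq E1' E2' E3'; ring.
have -> : t' * s - s' * t = 0 by rewrite [s' * t]mulrC h; ring.
by rewrite expr0n mulr0.
Qed.

Lemma DC : double_cover_of_line Q (<[a0]> + <[b0]>)%VS.
Proof.
exists (<[u1]> + <[u2]>)%VS; split; first exact: indep_dim indep_u.
split.
  move=> x hx x0; have [s [t [hst ->]]] := x_st hx x0.
  apply/mem_span2; exists (bq F1 F2 F3 s t), (bq G1 G2 G3 s t); exact: Hphi.
split.
  move=> w /mem_span2 [w1 [w2 ->]] w0.
  have hw : (w1 != 0) || (w2 != 0).
    have [e1|//] := eqVneq w1 0; have [e2|//] := eqVneq w2 0.
    by move: w0; rewrite e1 e2 !scale0r addr0 eqxx.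
  have [s [t [hst hr]]] := bq_root (hw1 w1 w2) (hw2 w1 w2) (hw3 w1 w2).
  exists (s *: a0 + t *: b0); split.
  - by apply/mem_span2; exists s, t.
  - exact: x_nz.
  - exact: phi_is_root.
have [c [s1 [t1 [s2 [t2 [c0 n1 n2 [E1 E2 E3]]]]]]] := bq_factor Dnz.
exists [:: s1 *: u1 + t1 *: u2; s2 *: u1 + t2 *: u2].
move=> w /mem_span2 [w1 [w2 ->]] w0 ntp.
have hw : (w1 != 0) || (w2 != 0).
  have [e1|//] := eqVneq w1 0; have [e2|//] := eqVneq w2 0.
  by move: w0; rewrite e1 e2 !scale0r addr0 eqxx.
have hd : bq D1 D2 D3 w1 w2 = 0.
  have [//|hd] := eqVneq (bq D1 D2 D3 w1 w2) 0; exfalso; apply: ntp; apply: two_pre => //; by rewrite disc_D.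
move: hd; rewrite E1 E2 E3 bq_factorE => /eqP; rewrite !mulf_eq0 (negbTE c0) /= => /orP [] /eqP h.
- move/eqP: h; rewrite subr_eq0 => /eqP h.
  have [l [El Et]] := @prop2 _ s1 t1 w1 w2 n1 h.
  exists (s1 *: u1 + t1 *: u2); first by rewrite inE eqxx.
  exists l; split; last by rewrite El Et scalerDr !scalerA.
  apply/eqP => l0; move: w0; by rewrite El Et l0 !mul0r !scale0r addr0 eqxx.
- move/eqP: h; rewrite subr_eq0 => /eqP h.
  have [l [El Et]] := @prop2 _ s2 t2 w1 w2 n2 h.
  exists (s2 *: u1 + t2 *: u2); first by rewrite !inE eqxx orbT.
  exists l; split; last by rewrite El Et scalerDr !scalerA.
  apply/eqP => l0; move: w0; by rewrite El Et l0 !mul0r !scale0r addr0 eqxx.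
Qed.

End I.

Section J.
Variables (R : realType) (r alpha : nat) (Q : 'I_alpha.+1 -> {mpoly R[i][r.+1]}).
Hypothesis HQ2 : forall k, Q k \is 2.-homog.
Local Notation C := R[i].
Local Notation N := alpha.+1.
Local Notation n := r.+1.

Lemma not_row_free (P : vec R n) (p q a b : nat -> vec R n) (a0 b0 : vec R n) :
  ~ in_base Q P ->
  (forall m, fibre Q P (p m) /\ fibre Q P (q m) /\ ~ proportional (p m) (q m)) ->
  (forall m, (<[a m]> + <[b m]> = <[p m]> + <[q m]>)%VS) ->
  cvg_vec a a0 -> cvg_vec b b0 -> ~~ row_free (Mx Q a0 b0).
Proof.
move=> hP hpq hspan ca cb; apply/negP => /row_freeP [B hB].
have cv := cvC_det (cvC_mulmx B (cvC_Mx Q ca cb)).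
rewrite hB det1 in cv.
have [N0 HN] := cv 1 ltr01.
have hG : \det (Mx Q (a N0) (b N0) *m B) != 0.
  apply/eqP => h0; have := HN N0 (leqnn _); rewrite /= h0 sub0r normcN Normc.normc1. by rewrite ltxx.
have [[p0 hpc] [[q0 hqc] np]] := hpq N0.
have [s1 [t1 Ep]] : exists s1 t1, p N0 = s1 *: a N0 + t1 *: b N0.
  apply/mem_span2; rewrite hspan; apply/mem_span2; exists 1, 0; by rewrite scale1r scale0r addr0.
have [s2 [t2 Eq]] : exists s2 t2, q N0 = s2 *: a N0 + t2 *: b N0.
  apply/mem_span2; rewrite hspan; apply/mem_span2; exists 0, 1; by rewrite scale1r scale0r add0r.
have nz : forall (x : vec R n) s t, x = s *: a N0 + t *: b N0 -> x != 0 -> (s != 0) || (t != 0).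
  move=> x s t -> hx; have [s0|//] := eqVneq s 0; have [t0|//] := eqVneq t 0.
  by move: hx; rewrite s0 t0 !scale0r addr0 eqxx.
have st1 := nz _ _ _ Ep p0; have st2 := nz _ _ _ Eq q0.
have bp : ~ in_base Q (p N0) by move/in_baseE => h; move: (G_nonbase HQ2 hG st1); by rewrite -Ep h eqxx.
have bq' : ~ in_base Q (q N0) by move/in_baseE => h; move: (G_nonbase HQ2 hG st2); by rewrite -Eq h eqxx.
have [c1 [c10 E1]] := closure_phi HQ2 hP (conj p0 hpc) bp.
have [c2 [c20 E2]] := closure_phi HQ2 hP (conj q0 hqc) bq'.
have E : Phivec Q (s1 *: a N0 + t1 *: b N0) = (c1 / c2) *: Phivec Q (s2 *: a N0 + t2 *: b N0).
  by rewrite -Ep -Eq E1 E2 scalerA divfK.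
have [l [El Et]] := G_inj HQ2 hG st2 E.
apply: np; exists l; split.
  apply/eqP => l0; move: p0; by rewrite Ep El Et l0 !mul0r !scale0r addr0 eqxx.
by rewrite Ep Eq El Et scalerDr !scalerA.
Qed.


Lemma Hphi_of (a0 b0 : vec R n) (U : 'M[C]_(3, 2)) (V : 'M[C]_(2, N)) :
  Mx Q a0 b0 = U *m V -> forall s t,
  Phivec Q (s *: a0 + t *: b0) =
   bq (U ord0 ord0) (U (lift ord0 ord0) ord0) (U (lift ord0 (lift ord0 ord0)) ord0) s t
     *: row ord0 V
   + bq (U ord0 (lift ord0 ord0)) (U (lift ord0 ord0) (lift ord0 ord0))
        (U (lift ord0 (lift ord0 ord0)) (lift ord0 ord0)) s t *: row (lift ord0 ord0) V.
Proof.
move=> E s t; rewrite (Phivec_line HQ2) E mulmxA mulmx_sum_row.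
rewrite !big_ord_recl big_ord0 addr0 !mxE !sum3 !mxE /=.
congr (_ *: _ + _ *: _); rewrite /bq; ring.
Qed.

Lemma back (L : {vspace 'rV[C]_n}) : \dim L = 2%N ->
  (forall x : 'rV[C]_n, x \in L -> x != 0 -> ~ in_base Q x) ->
  forall P, ~ in_base Q P -> secant_line (fibre Q P) L -> double_cover_of_line Q L.
Proof.
move=> HL HLX P hP [p [q [a [b [a0 [b0 [hpq [hspan [ca [cb hL]]]]]]]]]].
rewrite -hL in HL HLX *.
have hab := dim_indep HL.
have [U [V E]] := factor32 (not_row_free hP hpq hspan ca cb).
apply: DC => //.
  exact: Hphi_of E.
move=> s t hst; apply/eqP => h0.
apply: (HLX (s *: a0 + t *: b0)).
- by apply/mem_span2; exists s, t.
- exact: x_nz.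
- exact/in_baseE.
Qed.

End J.

Section K.
Variables (R : realType) (r alpha : nat) (Q : 'I_alpha.+1 -> {mpoly R[i][r.+1]}).
Hypothesis HQ2 : forall k, Q k \is 2.-homog.
Local Notation C := R[i].
Local Notation N := alpha.+1.
Local Notation n := r.+1.

Lemma exists_two (L : {vspace 'rV[C]_n}) (M : {vspace 'rV[C]_N}) (sl : seq (vec R N)) :
  \dim M = 2%N ->
  (forall w : vec R N, w \in M -> w != 0 -> ~ two_preimages Q L w ->
         exists2 w', w' \in sl & proportional w w') ->
  exists w, two_preimages Q L w.
Proof.
move=> hM hsl.
have [u1 [u2 [hu1 hu2 hi]]] := basis2 hM.
pose wt (t : 'I_(size sl).+1) : vec R N := u1 + (t : nat)%:R *: u2.
have wtM t : wt t \in M by rewrite rpredD // rpredZ.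
have wt0 t : wt t != 0.
  apply/eqP => h; have := hi 1 (t : nat)%:R; rewrite scale1r -/(wt t) h => /(_ erefl) [].
  by move/eqP; rewrite oner_eq0.
apply: NNPP => hn.
have H : forall t, exists k : 'I_(size sl), proportional (wt t) (nth 0 sl k).
  move=> t; have [w' hw' hp] := hsl _ (wtM t) (wt0 t) (fun h => hn (ex_intro _ _ h)).
  exists (Ordinal (etrans (index_mem w' sl) hw')). by rewrite /= nth_index.
have [j hj] := fin_all_exists H.
have ij : injective j.
  move=> t1 t2 e.
  have h2 := proportional_sym (hj t2); rewrite -e in h2.
  have := proportional_trans (hj t1) h2.
  case=> c [c0 Ec]; move: Ec; rewrite /wt scalerDr scalerA -[u1 in LHS]scale1r.
  move/(indep_coord hi) => [c1 e2]; rewrite -c1 mul1r in e2.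
  apply/val_inj/eqP; by rewrite -(eqr_nat C) e2.
have := @leq_card _ _ j ij; by rewrite !card_ord ltnn.
Qed.


Lemma in_closure (P y : vec R n) : preimage_set Q P y -> fibre Q P y.
Proof. move=> h; split; [by case: h | by move=> d p _ H; apply: H]. Qed.

Lemma forth (L : {vspace 'rV[C]_n}) : \dim L = 2%N ->
  (forall x : 'rV[C]_n, x \in L -> x != 0 -> ~ in_base Q x) ->
  double_cover_of_line Q L ->
  exists P : 'rV[C]_n,
    [/\ P != 0, ~ in_base Q P, ~ is_linear (fibre Q P) & secant_line (fibre Q P) L].
Proof.
move=> HL HLX [M [hM [himg [hsurj [sl hsl]]]]].
have [w [x1 [x2 [[hx1 x10 hx2 x20] [p1 [p2 [np hall]]]]]]] := exists_two hM hsl.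
have hi : indep x1 x2 by apply: nonprop_indep.
have EL := span2_eq HL hx1 hx2 hi.
have b1 := HLX _ hx1 x10.
have f1 : fibre Q x1 x1.
  apply: in_closure; split => //; split => //; exists 1; split; [exact: oner_neq0|by rewrite scale1r].
have f2 : fibre Q x1 x2.
  apply: in_closure; split => //; split; first exact: HLX.
  exact: proportional_trans p2 (proportional_sym p1).
exists x1; split => //.
- move=> [W HW].
  have xW : forall x, x \in L -> x != 0 -> Phi_is Q x (Phivec Q x1).
    move=> x hx x0; apply: (closure_phi HQ2 b1) (HLX _ hx x0).
    apply/(HW _ x0); move: hx; rewrite EL => /mem_span2 [s [t ->]].
    have w1 : x1 \in W by apply/(HW _ x10).
    have w2 : x2 \in W by apply/(HW _ x20).
    by rewrite rpredD // rpredZ.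
  have [u1 [u2 [hu1 hu2 hiu]]] := basis2 hM.
  have [u0 nu] := indep_nz hiu.
  have nb1 : Phivec Q x1 != 0 by apply/eqP => /in_baseE.
  have [u [hu [u00 npu]]] : exists u, [/\ u \in M, u != 0 & ~ proportional u (Phivec Q x1)].
    case: (classic (proportional u1 (Phivec Q x1))) => h1; last by exists u1.
    case: (classic (proportional u2 (Phivec Q x1))) => h2; last by exists u2.
    exfalso; case: h1 => c [c0 Ec]; case: h2 => d [d0 Ed].
    have := hiu d (- c); rewrite Ec Ed !scalerA mulNr scaleNr (mulrC c d) subrr => /(_ erefl) [d00 _].
    by move/eqP: d0.
  have [x [hx x0 hpx]] := hsurj u hu u00.
  apply: npu; apply: proportional_trans (proportional_sym hpx) (xW x hx x0).
- exists (fun _ => x1), (fun _ => x2), (fun _ => x1), (fun _ => x2), x1, x2.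
  have cvc : forall v : vec R n, cvg_vec (fun _ => v) v.
    move=> v e e0; exists 0%N => m _ i; by rewrite subrr normr0 ltcR.
  split; first by move=> m; split => //; split.
  split; first by [].
  split; first exact: cvc.
  split; first exact: cvc.
  by rewrite EL.
Qed.

End K.

Unset Implicit Arguments.
Theorem lemma4p2 (R : realType) (r alpha : nat)
  (Q : 'I_alpha.+1 -> {mpoly R[i][r.+1]})
  (HQ2 : forall k, Q k \is 2.-homog)
  (HQind : forall c : 'I_alpha.+1 -> R[i],
     \sum_k c k *: Q k = 0 -> forall k, c k = 0)
  (L : {vspace 'rV[R[i]]_r.+1})
  (HL : \dim L = 2%N)
  (HLX : forall x : 'rV[R[i]]_r.+1, x \in L -> x != 0 -> ~ in_base Q x) :
  double_cover_of_line Q L <->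
  exists P : 'rV[R[i]]_r.+1,
    [/\ P != 0, ~ in_base Q P,
        ~ is_linear (fibre Q P) & secant_line (fibre Q P) L].
Proof.
split.
- exact: (forth HQ2 HL HLX).
- case=> P [P0 hP nl sec]; exact: (back HQ2 HL HLX hP sec).
Qed.
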